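(* Let $\mathcal{H}$ and $\mathcal{K}$ be finite-dimensional complex Hilbert spaces and let $\Psi: B(\mathcal{H})\to B(\mathcal{K})$ be a Hermitian-preserving trace-preserving linear map, with dual (adjoint) map $\Psi^*: B(\mathcal{K})\to B(\mathcal{H})$ defined by $\operatorname{Tr}(\Psi^*(Y)^\dagger X)=\operatorname{Tr}(Y^\dagger\Psi(X))$ for all $X\in B(\mathcal{H})$, $Y\in B(\mathcal{K})$. Then exactly one of the following holds: (1) $\Psi$ is semi-positive, i.e. there is an invertible density matrix $\rho\in B(\mathcal{H})$ such that $\Psi(\rho)$ is an invertible density matrix; (2) $-\Psi^*$ is semi-nonnegative, i.e. there is a density matrix $\sigma\in B(\mathcal{K})$ such that $-\Psi^*(\sigma)$ is positive semidefinite.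
   Context: $B(\mathcal{H})$ denotes all linear operators on $\mathcal{H}$; a density matrix is a positive semidefinite operator of trace one. A map is Hermitian-preserving if $\Psi(X^\dagger)=\Psi(X)^\dagger$ and trace-preserving if $\operatorname{Tr}\Psi(X)=\operatorname{Tr}X$. *)

(* Defs.v *)
From HB Require Import structures.
From mathcomp Require Import all_boot all_order all_algebra.
From mathcomp Require Import sesquilinear spectral.
From mathcomp Require Import complex.
From mathcomp Require Import reals.
Set Implicit Arguments. Unset Strict Implicit. Unset Printing Implicit Defensive.
Import Order.TTheory GRing.Theory Num.Theory.
Local Open Scope ring_scope.
Local Open Scope sesquilinear_scope.

Section Defs.
Variable C : numClosedFieldType.

(* positive semidefinite: v^* A v >= 0 (real nonnegative) for all v *)
Definition psd n (A : 'M[C]_n) : Prop :=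
  forall v : 'cV[C]_n, 0 <= (v ^t* *m A *m v) 0 0.

Definition density n (A : 'M[C]_n) : Prop := psd A /\ \tr A = 1.

Definition invertible_density n (A : 'M[C]_n) : Prop :=
  density A /\ A \in unitmx.

Definition hermitian_preserving n m (Psi : 'M[C]_n -> 'M[C]_m) : Prop :=
  forall X, Psi (X ^t*) = (Psi X) ^t*.

Definition trace_preserving n m (Psi : 'M[C]_n -> 'M[C]_m) : Prop :=
  forall X, \tr (Psi X) = \tr X.

Definition is_dual_map n m (Psi : 'M[C]_n -> 'M[C]_m)
  (Psistar : 'M[C]_m -> 'M[C]_n) : Prop :=
  forall X Y, \tr ((Psistar Y) ^t* *m X) = \tr (Y ^t* *m Psi X).

Definition semi_positive n m (Psi : 'M[C]_n -> 'M[C]_m) : Prop :=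
  exists rho, invertible_density rho /\ invertible_density (Psi rho).

Definition semi_nonnegative n m (Phi : 'M[C]_n -> 'M[C]_m) : Prop :=
  exists sigma, density sigma /\ psd (Phi sigma).
End Defs.

(* Main.v *)
Require Import Defs.
From HB Require Import structures.
From mathcomp Require Import all_boot all_order all_algebra.
From mathcomp Require Import sesquilinear spectral.
From mathcomp Require Import complex.
From mathcomp Require Import reals.
From mathcomp Require Import classical_sets topology normedtype derive.
From mathcomp Require Import ring lra.
Import Order.TTheory GRing.Theory Num.Theory.
Import numFieldTopology.Exports numFieldNormedType.Exports.
Set Implicit Arguments. Unset Strict Implicit. Unset Printing Implicit Defensive.
Local Open Scope complex_scope.
Local Open Scope ring_scope.
Local Open Scope sesquilinear_scope.
Section P1.
Variable R : realType.
Local Notation C := R[i].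
Local Notation Re := (@complex.Re R).
Local Notation Im := (@complex.Im R).

Lemma ReD (a b : C) : Re (a + b) = Re a + Re b. Proof. by case: a; case: b. Qed.
Lemma ImD (a b : C) : Im (a + b) = Im a + Im b. Proof. by case: a; case: b. Qed.
Lemma ReN (a : C) : Re (- a) = - Re a. Proof. by case: a. Qed.
Lemma ImN (a : C) : Im (- a) = - Im a. Proof. by case: a. Qed.
Lemma Re0 : Re 0 = 0. Proof. by []. Qed.
Lemma Im0 : Im 0 = 0. Proof. by []. Qed.
Lemma ReM (a b : C) : Re (a * b) = Re a * Re b - Im a * Im b.
Proof. by case: a => a1 a2; case: b => b1 b2. Qed.
Lemma ImM (a b : C) : Im (a * b) = Re a * Im b + Im a * Re b.
Proof. by case: a => a1 a2; case: b => b1 b2 /=; ring. Qed.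
Lemma Rec (r : R) : Re r%:C = r. Proof. by []. Qed.
Lemma Imc (r : R) : Im r%:C = 0. Proof. by []. Qed.
Lemma ReJ (a : C) : Re (a^*) = Re a. Proof. by case: a. Qed.
Lemma ImJ (a : C) : Im (a^*) = - Im a. Proof. by case: a. Qed.
Lemma ReCM (r : R) (a : C) : Re (r%:C * a) = r * Re a.
Proof. by rewrite ReM /= mul0r subr0. Qed.
Lemma ImCM (r : R) (a : C) : Im (r%:C * a) = r * Im a.
Proof. by rewrite ImM /= mul0r addr0. Qed.
Lemma Re_sum (I : Type) (s : seq I) (F : I -> C) :
  Re (\sum_(i <- s) F i) = \sum_(i <- s) Re (F i).
Proof. elim: s => [|a s IH]; first by rewrite !big_nil. by rewrite !big_cons ReD IH. Qed.
Lemma Im_sum (I : Type) (s : seq I) (F : I -> C) :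
  Im (\sum_(i <- s) F i) = \sum_(i <- s) Im (F i).
Proof. elim: s => [|a s IH]; first by rewrite !big_nil. by rewrite !big_cons ImD IH. Qed.
Lemma ReJM (a b : C) : Re (a^* * b) = Re a * Re b + Im a * Im b.
Proof. by rewrite ReM ReJ ImJ mulNr opprK. Qed.
Lemma C_ge0 (z : C) : (0 <= z) <-> (Im z = 0 /\ 0 <= Re z).
Proof.
rewrite lecE /=; split; first by case/andP => /eqP -> ->.
by case=> -> ->; rewrite eqxx.
Qed.
Lemma C_gt0 (z : C) : (0 < z) <-> (Im z = 0 /\ 0 < Re z).
Proof.
rewrite ltcE /=; split; first by case/andP => /eqP -> ->.
by case=> -> ->; rewrite eqxx.
Qed.
Lemma C_real_eq (z : C) : Im z = 0 -> z = (Re z)%:C.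
Proof. by case: z => a b /= ->. Qed.
Lemma conj_real (z : C) : z^* = z -> Im z = 0.
Proof. move=> /(congr1 (@complex.Im R)); rewrite ImJ => h; lra. Qed.
Lemma abs_Re_le (z : C) : `|Re z|%:C <= `|z|.
Proof. exact: normc_ge_Re. Qed.
Lemma abs_Im_le (z : C) : `|Im z|%:C <= `|z|.
Proof.
have := normc_ge_Re (z * 'i%C); rewrite ReiNIm normrN normrM.
have h : `|'i%C| = 1 :> C by rewrite complexiE normCi.
by rewrite h mulr1.
Qed.
End P1.
Section P2.
Variable R : realType.
Local Notation C := R[i].
Local Notation Re := (@complex.Re R).
Local Notation Im := (@complex.Im R).

Definition ipR p q (A B : 'M[C]_(p, q)) : R :=
  \sum_i \sum_j (Re (A i j) * Re (B i j) + Im (A i j) * Im (B i j)).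

Definition form p (v : 'cV[C]_p) (A : 'M[C]_p) : C := (v ^t* *m A *m v) 0 0.

Variables p q : nat.
Implicit Types A B X Y : 'M[C]_(p, q).

Lemma ipRC A B : ipR A B = ipR B A.
Proof. by apply: eq_bigr => i _; apply: eq_bigr => j _; rewrite mulrC [Im _ * _]mulrC. Qed.

Lemma ipRDr A B1 B2 : ipR A (B1 + B2) = ipR A B1 + ipR A B2.
Proof.
rewrite /ipR -big_split; apply: eq_bigr => i _; rewrite -big_split.
by apply: eq_bigr => j _; rewrite /= !mxE ReD ImD; ring.
Qed.
Lemma ipRDl A1 A2 B : ipR (A1 + A2) B = ipR A1 B + ipR A2 B.
Proof. by rewrite ipRC ipRDr ![ipR B _]ipRC. Qed.
Lemma ipRNr A B : ipR A (- B) = - ipR A B.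
Proof.
rewrite /ipR -sumrN; apply: eq_bigr => i _; rewrite -sumrN.
by apply: eq_bigr => j _; rewrite !mxE ReN ImN; ring.
Qed.
Lemma ipRNl A B : ipR (- A) B = - ipR A B.
Proof. by rewrite ipRC ipRNr ipRC. Qed.
Lemma ipRBr A B1 B2 : ipR A (B1 - B2) = ipR A B1 - ipR A B2.
Proof. by rewrite ipRDr ipRNr. Qed.
Lemma ipRBl A1 A2 B : ipR (A1 - A2) B = ipR A1 B - ipR A2 B.
Proof. by rewrite ipRDl ipRNl. Qed.
Lemma ipRZr (r : R) A B : ipR A (r%:C *: B) = r * ipR A B.
Proof.
rewrite /ipR mulr_sumr; apply: eq_bigr => i _; rewrite mulr_sumr.
by apply: eq_bigr => j _; rewrite !mxE ReCM ImCM; ring.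
Qed.
Lemma ipRZl (r : R) A B : ipR (r%:C *: A) B = r * ipR A B.
Proof. by rewrite ipRC ipRZr ipRC. Qed.
Lemma ipR0r A : ipR A 0 = 0.
Proof. by rewrite /ipR big1 // => i _; rewrite big1 // => j _; rewrite !mxE /=; ring. Qed.
Lemma ipR0l A : ipR 0 A = 0.
Proof. by rewrite ipRC ipR0r. Qed.

Lemma ipR_ge0 A : 0 <= ipR A A.
Proof.
apply: sumr_ge0 => i _; apply: sumr_ge0 => j _.
by rewrite -!expr2 addr_ge0 // sqr_ge0.
Qed.

Lemma ipR_entry A i j : (Re (A i j)) ^+ 2 <= ipR A A /\ (Im (A i j)) ^+ 2 <= ipR A A.
Proof.
have h : Re (A i j) * Re (A i j) + Im (A i j) * Im (A i j) <= ipR A A.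
  rewrite /ipR (bigD1 i) //= (bigD1 j) //= -addrA lerDl.
  apply: addr_ge0; first by apply: sumr_ge0 => k _; rewrite -!expr2 addr_ge0 // sqr_ge0.
  by apply: sumr_ge0 => k _; apply: sumr_ge0 => l _; rewrite -!expr2 addr_ge0 // sqr_ge0.
have h1 := sqr_ge0 (Re (A i j)); have h2 := sqr_ge0 (Im (A i j)).
rewrite !expr2 in h1 h2 *; split; lra.
Qed.

Lemma ipR_eq0 A : ipR A A = 0 -> A = 0.
Proof.
move=> h; apply/matrixP => i j; rewrite mxE.
have [h1 h2] := ipR_entry A i j; rewrite h in h1 h2.
have e1 : Re (A i j) = 0 by apply/eqP; rewrite -sqrf_eq0 eq_le h1 sqr_ge0.
have e2 : Im (A i j) = 0 by apply/eqP; rewrite -sqrf_eq0 eq_le h2 sqr_ge0.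
by case: (A i j) e1 e2 => a b /= -> ->.
Qed.

Lemma ipR_tr A B : ipR A B = Re (\tr (A ^t* *m B)).
Proof.
rewrite /mxtrace Re_sum /ipR exchange_big; apply: eq_bigr => j _.
rewrite mxE Re_sum; apply: eq_bigr => i _.
by rewrite !mxE ReJM.
Qed.

Lemma ipR_AMGM (l : R) X Y : 0 < l ->
  2 * `|ipR X Y| <= l * ipR X X + l^-1 * ipR Y Y.
Proof.
move=> l0.
have key : forall Y', 2 * ipR X Y' <= l * ipR X X + l^-1 * ipR Y' Y'.
  move=> Y'; have := ipR_ge0 (l%:C *: X - Y').
  rewrite ipRBl !ipRBr !ipRZl !ipRZr [ipR Y' X]ipRC => h.
  have hl : l^-1 * (l * (l * ipR X X) - l * ipR X Y' - (l * ipR X Y' - ipR Y' Y')) =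
    l * ipR X X - 2 * ipR X Y' + l^-1 * ipR Y' Y'.
    by field; rewrite gt_eqF.
  have : 0 <= l^-1 * (l * (l * ipR X X) - l * ipR X Y' - (l * ipR X Y' - ipR Y' Y')).
    by rewrite mulr_ge0 // invr_ge0 ltW.
  rewrite hl; lra.
have := key Y; have := key (- Y); rewrite ipRNr ipRNl ipRNr opprK.
case: (lerP 0 (ipR X Y)) => hs; [rewrite ger0_norm // | rewrite ltr0_norm //]; lra.
Qed.

End P2.
Section P3.
Variable R : realType.
Local Notation C := R[i].
Local Notation Re := (@complex.Re R).
Local Notation Im := (@complex.Im R).

Lemma tcM a b c (A : 'M[C]_(a, b)) (B : 'M[C]_(b, c)) : (A *m B)^t* = B^t* *m A^t*.
Proof. by rewrite trmx_mul map_mxM. Qed.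
Lemma tcD a b (A B : 'M[C]_(a, b)) : (A + B)^t* = A^t* + B^t*.
Proof. by apply/matrixP => i j; rewrite !mxE rmorphD. Qed.
Lemma tcN a b (A : 'M[C]_(a, b)) : (- A)^t* = - A^t*.
Proof. by apply/matrixP => i j; rewrite !mxE rmorphN. Qed.
Lemma tcZ a b (c : C) (A : 'M[C]_(a, b)) : (c *: A)^t* = c^* *: A^t*.
Proof. by apply/matrixP => i j; rewrite !mxE rmorphM. Qed.
Lemma tc0 a b : (0 : 'M[C]_(a, b))^t* = 0.
Proof. by apply/matrixP => i j; rewrite !mxE rmorph0. Qed.
Lemma tc1 a : (1%:M : 'M[C]_a)^t* = 1%:M.
Proof. by apply/matrixP => i j; rewrite !mxE eq_sym rmorph_nat. Qed.
Lemma tc11 (M : 'M[C]_1) : M^t* 0 0 = (M 0 0)^*.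
Proof. by rewrite !mxE. Qed.
Lemma conjRc (r : R) : (r%:C)^* = r%:C :> C.
Proof. exact: conjc_real. Qed.

Definition bform p (u w : 'cV[C]_p) (A : 'M[C]_p) : C := (u ^t* *m A *m w) 0 0.

Variable p : nat.
Implicit Types (A B : 'M[C]_p) (u v w : 'cV[C]_p).

Lemma formE v A : form v A = bform v v A. Proof. by []. Qed.

Lemma bformDl u1 u2 w A : bform (u1 + u2) w A = bform u1 w A + bform u2 w A.
Proof. by rewrite /bform tcD !mulmxDl mxE. Qed.
Lemma bformDr u w1 w2 A : bform u (w1 + w2) A = bform u w1 A + bform u w2 A.
Proof. by rewrite /bform !mulmxDr mxE. Qed.
Lemma bformZl c u w A : bform (c *: u) w A = c^* * bform u w A.
Proof. by rewrite /bform tcZ -!scalemxAl mxE. Qed.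
Lemma bformZr c u w A : bform u (c *: w) A = c * bform u w A.
Proof. by rewrite /bform -!scalemxAr mxE. Qed.
Lemma bformDA u w A1 A2 : bform u w (A1 + A2) = bform u w A1 + bform u w A2.
Proof. by rewrite /bform mulmxDr mulmxDl mxE. Qed.
Lemma bformZA c u w A : bform u w (c *: A) = c * bform u w A.
Proof. by rewrite /bform -scalemxAr -scalemxAl mxE. Qed.
Lemma bform_delta A i j : bform (delta_mx i 0) (delta_mx j 0) A = A i j.
Proof.
rewrite /bform.
have -> : (delta_mx i 0 : 'cV[C]_p)^t* = delta_mx 0 i by rewrite trmx_delta map_delta_mx.
by rewrite -rowE -colE !mxE.
Qed.
Lemma bformJ u w A : bform u w (A^t*) = (bform w u A)^*.
Proof.
rewrite /bform -tc11 !tcM trmxCK mulmxA //.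
Qed.

Lemma formDA v A1 A2 : form v (A1 + A2) = form v A1 + form v A2.
Proof. exact: bformDA. Qed.
Lemma formZA c v A : form v (c *: A) = c * form v A.
Proof. exact: bformZA. Qed.
Lemma formJ v A : form v (A^t*) = (form v A)^*.
Proof. exact: bformJ. Qed.
Lemma formNA v A : form v (- A) = - form v A.
Proof. by rewrite -scaleN1r formZA mulN1r. Qed.

Lemma herm_form_real v A : A^t* = A -> Im (form v A) = 0.
Proof. by move=> h; apply: conj_real; rewrite -formJ h. Qed.

Lemma psd_herm A : psd A -> A^t* = A.
Proof.
move=> hA.
have r : forall v, Im (bform v v A) = 0 by move=> v; have /C_ge0[] := hA v.
have s1 : forall u w, Im (bform u w A) = - Im (bform w u A).
  move=> u w; have := r (u + w).
  rewrite bformDl !bformDr !ImD r r => h; lra.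
have s2 : forall u w, Re (bform u w A) = Re (bform w u A).
  move=> u w; have := s1 u ('i *: w).
  rewrite bformZl bformZr ImM ImM.
  have -> : ('i : C)^* = - 'i by rewrite conjCi.
  rewrite /= ?mul0r ?mulN1r ?mul1r ?add0r ?addr0 ?mulNr; lra.
apply/matrixP => i j; rewrite !mxE.
rewrite -(bform_delta A i j) -(bform_delta A j i).
move: (s1 (delta_mx j 0) (delta_mx i 0)) (s2 (delta_mx j 0) (delta_mx i 0)).
case: (bform _ _ A) => a b; case: (bform _ _ A) => c d /= h1 h2.
apply/eqP; rewrite eq_complex /= h1 h2 opprK !eqxx //.
Qed.

Lemma psd_Re A v : psd A -> 0 <= Re (form v A) /\ Im (form v A) = 0.
Proof. by move=> h; have /C_ge0[] := h v. Qed.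

Lemma psd_of_Re A : A^t* = A -> (forall v, 0 <= Re (form v A)) -> psd A.
Proof. by move=> hA h v; apply/C_ge0; split; [apply: herm_form_real | apply: h]. Qed.

Lemma form_ip v A : Re (form v A) = ipR (v *m v^t*) A.
Proof.
by rewrite ipR_tr tcM trmxCK -mulmxA mxtrace_mulC trace_mx11.
Qed.

Lemma vnormE v : (v^t* *m v) 0 0 = (ipR v v)%:C.
Proof.
rewrite mxE /ipR rmorph_sum /=.
apply: eq_bigr => k _; rewrite big_ord1 !mxE.
case: (v k 0) => a b /=; apply/eqP; rewrite eq_complex /=; apply/andP; split; apply/eqP; ring.
Qed.

Lemma tr_vv v : \tr (v *m v^t*) = (ipR v v)%:C.
Proof. by rewrite mxtrace_mulC trace_mx11 vnormE. Qed.

Lemma form_vv u v : form v (u *m u^t*) = ((v^t* *m u) 0 0) * ((v^t* *m u) 0 0)^*.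
Proof.
rewrite /form !mulmxA -[v^t* *m u *m u^t* *m v]mulmxA.
have -> : u^t* *m v = (v^t* *m u)^t* by rewrite tcM trmxCK.
by rewrite [in LHS]mxE big_ord1 tc11.
Qed.

Lemma psd_vv u : psd (u *m u^t*).
Proof. by move=> v; rewrite -/(form v _) form_vv -normCK exprn_ge0. Qed.

End P3.
Section P4.
Variable R : realType.
Local Notation C := R[i].
Local Notation Re := (@complex.Re R).
Local Notation Im := (@complex.Im R).
Variable p : nat.

Lemma spectral_herm (A : 'M[C]_p) : A^t* = A ->
  exists (P : 'M[C]_p) (d : 'rV[C]_p),
    [/\ P *m P^t* = 1%:M, P^t* *m P = 1%:M & A = P^t* *m diag_mx d *m P].
Proof.
move=> hA.
have nA : A \is normalmx by apply/normalmxP; rewrite hA.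
have U := spectral_unitarymx A.
have /orthomx_spectralP E := nA.
exists (spectralmx A), (spectral_diag A); split.
- exact/unitarymxP.
- by rewrite -(invmx_unitary U) mulVmx // unitarymx_unit.
- by rewrite {1}E invmx_unitary.
Qed.

Definition ucol (P : 'M[C]_p) k : 'cV[C]_p := P^t* *m delta_mx k 0.

Lemma tr_decomp (P : 'M[C]_p) d (N : 'M[C]_p) :
  P *m P^t* = 1%:M ->
  \tr (N *m (P^t* *m diag_mx d *m P)) = \sum_k form (ucol P k) N * d 0 k.
Proof.
move=> PP.
rewrite !mulmxA mxtrace_mulC !mulmxA mul_mx_diag /mxtrace.
apply: eq_bigr => k _; rewrite mxE; congr (_ * _).
rewrite -(bform_delta (P *m N *m P^t*) k k) /bform /form /ucol tcM trmxCK.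
by rewrite !mulmxA.
Qed.

Lemma tr_sum_form (P : 'M[C]_p) (N : 'M[C]_p) :
  P *m P^t* = 1%:M -> P^t* *m P = 1%:M -> \tr N = \sum_k form (ucol P k) N.
Proof.
move=> PP PP'.
have := tr_decomp (const_mx 1) N PP.
have -> : diag_mx (const_mx 1 : 'rV[C]_p) = 1%:M.
  by apply/matrixP => i j; rewrite !mxE.
rewrite mulmx1 PP' mulmx1 => ->.
by apply: eq_bigr => k _; rewrite mxE mulr1.
Qed.

Lemma form_ucol_diag (P : 'M[C]_p) d k :
  P *m P^t* = 1%:M -> form (ucol P k) (P^t* *m diag_mx d *m P) = d 0 k.
Proof.
move=> PP.
rewrite /form /ucol tcM trmxCK.
rewrite !mulmxA -(mulmxA _ P (P^t*)) PP mulmx1 -(mulmxA _ P (P^t*)) PP mulmx1.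
by rewrite -/(bform _ _ _) bform_delta mxE eqxx mulr1n.
Qed.

Lemma tr_psd_psd (N A : 'M[C]_p) : psd N -> psd A -> 0 <= \tr (N *m A).
Proof.
move=> hN hA.
have [P [d [PP PP' E]]] := spectral_herm (psd_herm hA).
rewrite E tr_decomp //; apply: sumr_ge0 => k _; apply: mulr_ge0; first exact: hN.
rewrite -(form_ucol_diag d k PP) -E; exact: hA.
Qed.

Lemma tr_psd_pd (S B : 'M[C]_p) : psd S -> \tr S = 1 -> psd B -> B \in unitmx ->
  0 < \tr (S *m B).
Proof.
move=> hS tS hB uB.
have [P [d [PP PP' E]]] := spectral_herm (psd_herm hB).
have dge : forall k, 0 <= d 0 k.
  by move=> k; rewrite -(form_ucol_diag d k PP) -E; exact: hB.
have dne : forall k, d 0 k != 0.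
  move=> k; apply/negP => /eqP dk.
  move: uB; rewrite E unitmxE !det_mulmx det_diag.
  have -> : \prod_i d 0 i = 0 by apply/eqP/prodf_eq0; exists k => //; rewrite dk.
  by rewrite mulr0 mul0r unitr0.
rewrite E tr_decomp //.
have ge : forall k, 0 <= form (ucol P k) S * d 0 k by move=> k; apply: mulr_ge0; [exact: hS | exact: dge].
rewrite lt_def; apply/andP; split; last by apply: sumr_ge0.
apply/negP => /eqP h0.
have h := psumr_eq0P (fun k _ => ge k) h0.
move: tS; rewrite (tr_sum_form S PP PP') big1 => [/eqP|k _].
  by rewrite eq_sym oner_eq0.
by have /eqP := h k isT; rewrite mulf_eq0 (negbTE (dne k)) orbF => /eqP.
Qed.

End P4.
Section P5.
Variable R : realType.
Local Notation C := R[i].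
Local Notation Re := (@complex.Re R).
Local Notation Im := (@complex.Im R).

Lemma tr_mul_delta p (M : 'M[C]_p) i j : \tr (M *m delta_mx i j) = M j i.
Proof.
rewrite -(mul_delta_mx (0 : 'I_1)) mulmxA mxtrace_mulC mulmxA -rowE -colE trace_mx11.
by rewrite !mxE.
Qed.

Lemma nondeg p (A B : 'M[C]_p) :
  (forall X, \tr (A^t* *m X) = \tr (B^t* *m X)) -> A = B.
Proof.
move=> h; apply/matrixP => i j; have := h (delta_mx i j).
rewrite !tr_mul_delta !mxE => /(congr1 Num.conj); rewrite !conjCK //.
Qed.

Variables (p q : nat) (Psi : {linear 'M[C]_p -> 'M[C]_q}) (Psistar : 'M[C]_q -> 'M[C]_p).
Hypothesis dual : is_dual_map Psi Psistar.

Lemma PsistarD Y1 Y2 : Psistar (Y1 + Y2) = Psistar Y1 + Psistar Y2.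
Proof.
apply: nondeg => X; rewrite dual tcD !mulmxDl !mxtraceD -!dual.
by rewrite tcD mulmxDl mxtraceD.
Qed.
Lemma PsistarZ c Y : Psistar (c *: Y) = c *: Psistar Y.
Proof.
apply: nondeg => X; rewrite dual !tcZ -!scalemxAl !mxtraceZ -dual //.
Qed.
Lemma Psistar0 : Psistar 0 = 0.
Proof. by rewrite -(scale0r 0) PsistarZ scale0r. Qed.
Lemma PsistarN Y : Psistar (- Y) = - Psistar Y.
Proof. by rewrite -scaleN1r PsistarZ scaleN1r. Qed.
Lemma PsistarB Y1 Y2 : Psistar (Y1 - Y2) = Psistar Y1 - Psistar Y2.
Proof. by rewrite PsistarD PsistarN. Qed.

Lemma dual_ip Y X : ipR (Psistar Y) X = ipR Y (Psi X).
Proof. by rewrite !ipR_tr dual. Qed.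

Lemma exclusive :
  ~ (semi_positive Psi /\ semi_nonnegative (fun Y => - Psistar Y)).
Proof.
case=> [[rho [[[rpsd rtr] ru] [[Bpsd Btr] Bu]]] [sig [[spsd str] Npsd]]].
have d := dual rho sig.
have hN := psd_herm Npsd; rewrite tcN in hN; have hS := oppr_inj hN.
rewrite hS (psd_herm spsd) in d.
have h1 : 0 <= \tr ((- Psistar sig) *m rho) by apply: tr_psd_psd.
have h2 := tr_psd_pd spsd str Bpsd Bu.
rewrite mulNmx linearN /= oppr_ge0 d in h1.
by move: (lt_le_trans h2 h1); rewrite ltxx.
Qed.

End P5.
Local Open Scope classical_set_scope.
Section P6.
Variable R : realType.
Local Notation C := R[i].
Local Notation Re := (@complex.Re R).
Local Notation Im := (@complex.Im R).

Section Gen.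
Variable N : nat.

Lemma cont_sum (I : Type) (s : seq I) (F : I -> 'rV[R]_N -> R) :
  (forall i, continuous (F i)) -> continuous (fun x => \sum_(i <- s) F i x).
Proof.
move=> hF; elim: s => [|a s IH].
  have -> : (fun x : 'rV[R]_N => \sum_(i <- [::]) F i x) = (fun _ => 0).
    by apply: boolp.funext => x; rewrite big_nil.
  exact: cst_continuous.
have -> : (fun x => \sum_(i <- a :: s) F i x) = (fun x => F a x + \sum_(i <- s) F i x).
  by apply: boolp.funext => x; rewrite big_cons.
by move=> x; apply: continuousD; [apply: hF | apply: IH].
Qed.

Lemma cont_lin (f : 'rV[R]_N -> R) :
  (forall x y, f (x + y) = f x + f y) -> (forall r x, f (r *: x) = r * f x) ->
  continuous f.
Proof.
move=> fD fZ.
have f0 : f 0 = 0 by have := fD 0 0; rewrite addr0 => h; lra.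
have fsum : forall (s : seq 'I_N) (g : 'I_N -> 'rV[R]_N),
    f (\sum_(k <- s) g k) = \sum_(k <- s) f (g k).
  move=> s g; elim: s => [|a s IH]; first by rewrite !big_nil.
  by rewrite !big_cons fD IH.
have -> : f = (fun x => \sum_(k <- index_enum 'I_N) (x 0 k * f (delta_mx 0 k))).
  apply: boolp.funext => x; rewrite {1}(row_sum_delta x) fsum.
  by apply: eq_bigr => k _; rewrite fZ.
apply: cont_sum => k x; apply: continuousM; first exact: coord_continuous.
exact: cst_continuous.
Qed.

Lemma cont_rlin (g : 'rV[R]_N -> C) :
  (forall x y, g (x + y) = g x + g y) -> (forall r x, g (r *: x) = r%:C * g x) ->
  continuous (fun x => Re (g x)) /\ continuous (fun x => Im (g x)).
Proof.
move=> gD gZ; split; apply: cont_lin => [x y|r x];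
  by rewrite ?gD ?gZ ?ReD ?ImD ?ReCM ?ImCM.
Qed.

Lemma closed_ge0 (I : Type) (f : I -> 'rV[R]_N -> R) :
  (forall i, continuous (f i)) -> closed [set x | forall i, 0 <= f i x].
Proof.
move=> hf.
have -> : [set x | forall i, 0 <= f i x] = \bigcap_(i in setT) (f i @^-1` [set y | 0 <= y]).
  by apply/seteqP; split => x /= h i; [move=> _; apply: h | apply: h].
apply: closed_bigI => i _; apply: preimage_closed; last exact: closed_ge.
by move=> x _; apply: hf.
Qed.

Lemma closed_iff (P : 'rV[R]_N -> Prop) (I : Type) (f : I -> 'rV[R]_N -> R) :
  (forall i, continuous (f i)) -> (forall x, P x <-> forall i, 0 <= f i x) ->
  closed [set x | P x].
Proof.
move=> hf hP; have -> : [set x | P x] = [set x | forall i, 0 <= f i x].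
  by apply/seteqP; split => x /= /hP.
exact: closed_ge0.
Qed.

End Gen.

Variables p q : nat.
Definition NN := ((q * q + q * q) + (p * p + p * p))%N.

Definition sigx (x : 'rV[R]_NN) : 'M[C]_q := \matrix_(i, j)
  Complex (x 0 (lshift _ (lshift _ (mxvec_index i j)))) (x 0 (lshift _ (rshift _ (mxvec_index i j)))).
Definition Qx (x : 'rV[R]_NN) : 'M[C]_p := \matrix_(i, j)
  Complex (x 0 (rshift _ (lshift _ (mxvec_index i j)))) (x 0 (rshift _ (rshift _ (mxvec_index i j)))).
Definition coords (S : 'M[C]_q) (Q : 'M[C]_p) : 'rV[R]_NN :=
  row_mx (row_mx (mxvec (map_mx Re S)) (mxvec (map_mx Im S)))
         (row_mx (mxvec (map_mx Re Q)) (mxvec (map_mx Im Q))).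

Lemma sigx_coords S Q : sigx (coords S Q) = S.
Proof.
apply/matrixP => i j; rewrite mxE /coords !row_mxEl row_mxEr !mxvecE !mxE.
by case: (S i j).
Qed.
Lemma Qx_coords S Q : Qx (coords S Q) = Q.
Proof.
apply/matrixP => i j; rewrite mxE /coords !row_mxEr row_mxEl !mxvecE !mxE.
by case: (Q i j).
Qed.
Lemma sigxD x y : sigx (x + y) = sigx x + sigx y.
Proof. by apply/matrixP => i j; rewrite !mxE. Qed.
Lemma QxD x y : Qx (x + y) = Qx x + Qx y.
Proof. by apply/matrixP => i j; rewrite !mxE. Qed.
Lemma sigxZ r x : sigx (r *: x) = r%:C *: sigx x.
Proof. apply/matrixP => i j; rewrite !mxE; apply/eqP; rewrite eq_complex /=; apply/andP; split; apply/eqP; ring. Qed.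
Lemma QxZ r x : Qx (r *: x) = r%:C *: Qx x.
Proof. apply/matrixP => i j; rewrite !mxE; apply/eqP; rewrite eq_complex /=; apply/andP; split; apply/eqP; ring. Qed.
Lemma coordsD S1 Q1 S2 Q2 : coords (S1 + S2) (Q1 + Q2) = coords S1 Q1 + coords S2 Q2.
Proof.
rewrite /coords !add_row_mx; congr row_mx; congr row_mx;
by apply/rowP => k; rewrite !mxE; case/mxvec_indexP: k => i j; rewrite !mxvecE !mxE ?ReD ?ImD.
Qed.

Lemma coord_bound x M :
  (forall i j, `|Re (sigx x i j)| <= M /\ `|Im (sigx x i j)| <= M) ->
  (forall i j, `|Re (Qx x i j)| <= M /\ `|Im (Qx x i j)| <= M) ->
  forall k, `|x 0 k| <= M.
Proof.
move=> hs hQ k.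
case: (splitP k) => [k1 e1|k2 e2].
  have -> : k = lshift _ k1 by apply/val_inj.
  case: (splitP k1) => [k3 e3|k4 e4].
    have -> : k1 = lshift _ k3 by apply/val_inj.
    case/mxvec_indexP: k3 e3 => i j _; have [h _] := hs i j; by rewrite mxE /= in h.
  have -> : k1 = rshift _ k4 by apply/val_inj.
  case/mxvec_indexP: k4 e4 => i j _; have [_ h] := hs i j; by rewrite mxE /= in h.
have -> : k = rshift _ k2 by apply/val_inj.
case: (splitP k2) => [k3 e3|k4 e4].
  have -> : k2 = lshift _ k3 by apply/val_inj.
  case/mxvec_indexP: k3 e3 => i j _; have [h _] := hQ i j; by rewrite mxE /= in h.
have -> : k2 = rshift _ k4 by apply/val_inj.
case/mxvec_indexP: k4 e4 => i j _; have [_ h] := hQ i j; by rewrite mxE /= in h.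
Qed.

End P6.
Section P7a.
Variable R : realType.
Local Notation C := R[i].
Local Notation Re := (@complex.Re R).
Local Notation Im := (@complex.Im R).

Lemma fo_real (a b e : R) : 0 < e -> 0 <= b ->
  (forall t, 0 < t -> t <= e -> 0 <= 2 * t * a + t ^+ 2 * b) -> 0 <= a.
Proof.
move=> e0 b0 h; rewrite leNgt; apply/negP => a0.
set D := e * b - a.
have D0 : 0 < D by rewrite /D; have := mulr_ge0 (ltW e0) b0; lra.
set t := e * (- a) / D.
have tD : t * D = e * (- a) by rewrite /t mulrVK // unitfE gt_eqF.
have t0 : 0 < t by rewrite /t divr_gt0 // mulr_gt0 // oppr_gt0.
have te : t <= e.
  rewrite /t ler_pdivrMr // /D; have := mulr_ge0 (ltW e0) (mulr_ge0 (ltW e0) b0).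
  rewrite mulrA; nra.
have tb : t * b <= - a.
  have : t * b * D <= - a * D.
    rewrite mulrAC tD /D; have := mulr_ge0 (ltW e0) b0; nra.
  by rewrite ler_pM2r.
have := h t t0 te.
have : 0 < t * (- a) by rewrite mulr_gt0 // oppr_gt0.
rewrite expr2; nra.
Qed.

Lemma ipR_entry2 p q (A : 'M[C]_(p, q)) i j : Re (A i j) ^+ 2 + Im (A i j) ^+ 2 <= ipR A A.
Proof.
rewrite /ipR (bigD1 i) //= (bigD1 j) //= -addrA !expr2 lerDl.
apply: addr_ge0; first by apply: sumr_ge0 => k _; rewrite -!expr2 addr_ge0 // sqr_ge0.
by apply: sumr_ge0 => k _; apply: sumr_ge0 => l _; rewrite -!expr2 addr_ge0 // sqr_ge0.
Qed.

Definition L1 p q (B : 'M[C]_(p, q)) : R := \sum_i \sum_j (`|Re (B i j)| + `|Im (B i j)|).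

Lemma L1_ge0 p q (B : 'M[C]_(p, q)) : 0 <= L1 B.
Proof. by apply: sumr_ge0 => i _; apply: sumr_ge0 => j _; rewrite addr_ge0. Qed.

Lemma L1_entry p q (B : 'M[C]_(p, q)) i j : `|Re (B i j)| <= L1 B /\ `|Im (B i j)| <= L1 B.
Proof.
have h : `|Re (B i j)| + `|Im (B i j)| <= L1 B.
  rewrite /L1 (bigD1 i) //= (bigD1 j) //= -addrA lerDl.
  apply: addr_ge0; first by apply: sumr_ge0 => k _; rewrite addr_ge0.
  by apply: sumr_ge0 => k _; apply: sumr_ge0 => l _; rewrite addr_ge0.
have := normr_ge0 (Re (B i j)); have := normr_ge0 (Im (B i j)); split; lra.
Qed.

Lemma ipR_L1 p q (S B : 'M[C]_(p, q)) :
  (forall i j, `|Re (S i j)| <= 1 /\ `|Im (S i j)| <= 1) -> `|ipR S B| <= L1 B.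
Proof.
move=> hS; apply: le_trans (ler_norm_sum _ _ _) _; apply: ler_sum => i _.
apply: le_trans (ler_norm_sum _ _ _) _; apply: ler_sum => j _.
have [h1 h2] := hS i j.
apply: le_trans (ler_normD _ _) _; rewrite !normrM; apply: lerD.
  by rewrite -[X in _ <= X]mul1r ler_wpM2r.
by rewrite -[X in _ <= X]mul1r ler_wpM2r.
Qed.

Lemma ipR_cdelta p q (c : C) (M : 'M[C]_(p, q)) i j :
  ipR (c *: delta_mx i j) M = Re c * Re (M i j) + Im c * Im (M i j).
Proof.
have E : forall k l, (c *: delta_mx i j) k l = if (k == i) && (l == j) then c else 0.
  by move=> k l; rewrite !mxE; case: (_ && _); rewrite ?mulr1 ?mulr0.
rewrite /ipR (bigD1 i) //= (bigD1 j) //= big1 => [|k kj]; last by rewrite E (negbTE kj) andbF /= !mul0r addr0.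
rewrite big1 => [|k ki]; last by rewrite big1 // => l _; rewrite E (negbTE ki) /= !mul0r addr0.
by rewrite E !eqxx /= !addr0.
Qed.

Lemma ipR_delta p q (M : 'M[C]_(p, q)) i j : ipR (delta_mx i j) M = Re (M i j).
Proof. by rewrite -[delta_mx i j]scale1r ipR_cdelta /= mul1r mul0r addr0. Qed.

Lemma ipR_idelta p q (M : 'M[C]_(p, q)) i j : ipR ('i%C *: delta_mx i j) M = Im (M i j).
Proof. by rewrite ipR_cdelta /= mul1r mul0r add0r. Qed.

End P7a.
Section P7b.
Variable R : realType.
Local Notation C := R[i].
Local Notation Re := (@complex.Re R).
Local Notation Im := (@complex.Im R).
Variable p : nat.
Implicit Types (A B : 'M[C]_p) (v : 'cV[C]_p).

Lemma tr_form A : \tr A = \sum_k form (delta_mx k 0) A.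
Proof. by apply: eq_bigr => k _; rewrite formE bform_delta. Qed.

Lemma form_one v : form v 1%:M = (ipR v v)%:C.
Proof. by rewrite /form mulmx1 vnormE. Qed.

Lemma vv_entry v i j : (v *m v^t*) i j = v i 0 * (v j 0)^*.
Proof. by rewrite !mxE big_ord1 !mxE. Qed.

Lemma ipR_vv v : ipR (v *m v^t*) (v *m v^t*) = (ipR v v) ^+ 2.
Proof.
rewrite -form_ip form_vv vnormE conjRc -rmorphM /=; by rewrite expr2.
Qed.

Lemma psdD A B : psd A -> psd B -> psd (A + B).
Proof. by move=> hA hB v; rewrite -/(form v _) formDA addr_ge0 //; [apply: hA | apply: hB]. Qed.

Lemma psdZ (r : R) A : 0 <= r -> psd A -> psd (r%:C *: A).
Proof. by move=> r0 hA v; rewrite -/(form v _) formZA mulr_ge0 // ?lecR //; apply: hA. Qed.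

Lemma unit_of_pos A : (forall v, v != 0 -> 0 < Re (form v A)) -> A \in unitmx.
Proof.
move=> h; rewrite -row_free_unit; apply/negPn/negP => nf.
have : kermx A != 0 by rewrite kermx_eq0.
case/matrix0Pn => i [j nz].
pose u := row i (kermx A).
have uA : u *m A = 0 by rewrite /u -row_mul mulmx_ker row0.
have u0 : u != 0.
  apply/negP => /eqP uz; move: nz.
  have : u 0 j = kermx A i j by rewrite /u mxE.
  by rewrite uz => e; rewrite -e mxE eqxx.
pose v := u^t*.
have vt : v^t* = u by rewrite /v trmxCK.
have v0 : v != 0 by apply/negP => /eqP e; move: u0; rewrite -vt e tc0 eqxx.
by have := h v v0; rewrite /form vt uA mul0mx mxE ltxx.
Qed.

Lemma psd_of_pos A : A^t* = A -> (forall v, 0 <= Re (form v A)) -> psd A.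
Proof. exact: psd_of_Re. Qed.

End P7b.
Section P8.
Variable R : realType.
Local Notation C := R[i].
Local Notation Re := (@complex.Re R).
Local Notation Im := (@complex.Im R).

Definition Rlin N (g : 'rV[R]_N -> C) :=
  (forall x y, g (x + y) = g x + g y) /\ (forall r x, g (r *: x) = r%:C * g x).

Lemma Rlin_cont N (g : 'rV[R]_N -> C) : Rlin g ->
  continuous (fun x => Re (g x)) /\ continuous (fun x => Im (g x)).
Proof. by case=> h1 h2; apply: cont_rlin. Qed.

Lemma closed_Cge0 N (I : Type) (g : I -> 'rV[R]_N -> C) :
  (forall i, Rlin (g i)) -> closed [set x | forall i, 0 <= g i x].
Proof.
move=> hg.
apply: (@closed_iff _ _ _ (I * option bool)%type
  (fun ib x => match ib.2 with None => Re (g ib.1 x)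
     | Some true => Im (g ib.1 x) | Some false => - Im (g ib.1 x) end)).
  case=> i [[]|] /=; have [c1 c2] := Rlin_cont (hg i) => //.
  by move=> x; apply: continuousN; apply: c2.
move=> x; split.
  by move=> h [i [[]|]] /=; have /C_ge0[e1 e2] := h i; rewrite ?e1 ?oppr0.
move=> h i; apply/C_ge0; split; last exact: (h (i, None)).
by have := h (i, Some true); have := h (i, Some false); rewrite /=; lra.
Qed.

Lemma closed_box N (P : 'rV[R]_N -> Prop) (I : Type) (g : I -> 'rV[R]_N -> C) (c : R) :
  (forall i, Rlin (g i)) ->
  (forall x, P x <-> forall i, `|Re (g i x)| <= c /\ `|Im (g i x)| <= c) ->
  closed [set x | P x].
Proof.
move=> hg hP.
apply: (@closed_iff _ _ _ (I * bool * bool)%type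
  (fun ib x => c + (if ib.2 then 1 else -1) * (if ib.1.2 then Re (g ib.1.1 x) else Im (g ib.1.1 x)))).
  case=> [[i b1] b2] x /=.
  have [c1 c2] := Rlin_cont (hg i).
  have hc : continuous (fun _ : 'rV[R]_N => c) by apply: cst_continuous.
  have hs : continuous (fun _ : 'rV[R]_N => (if b2 then 1 else -1 : R)) by apply: cst_continuous.
  have hr : continuous (fun x0 => if b1 then Re (g i x0) else Im (g i x0)) by case: b1.
  exact: (continuousD (hc x) (continuousM (hs x) (hr x))).
move=> x; rewrite hP; split.
  move=> h [[i b1] b2] /=; have [h1 h2] := h i; move: h1 h2; rewrite !ler_norml.
  by case: b1; case: b2; lra.
move=> h i; rewrite !ler_norml.
have := h (i, true, true); have := h (i, true, false).
have := h (i, false, true); have := h (i, false, false); rewrite /=; lra.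
Qed.

Variables n m : nat.
Local Notation p := n.+1.
Local Notation q := m.+1.
Variables (Psi : {linear 'M[C]_p -> 'M[C]_q}) (Psistar : 'M[C]_q -> 'M[C]_p).
Hypotheses (HP : hermitian_preserving Psi) (TP : trace_preserving Psi)
  (dual : is_dual_map Psi Psistar).

Local Notation sigx := (@sigx R p q).
Local Notation Qx := (@Qx R p q).
Local Notation coords := (@coords R p q).
Local Notation NN := (@NN p q).

Definition Wx (x : 'rV[R]_NN) := Psistar (sigx x) + Qx x.
Definition Fx x := ipR (Wx x) (Wx x).

Lemma WxD x y : Wx (x + y) = Wx x + Wx y.
Proof. by rewrite /Wx sigxD QxD (PsistarD dual) addrACA. Qed.
Lemma WxZ r x : Wx (r *: x) = r%:C *: Wx x.
Proof. by rewrite /Wx sigxZ QxZ (PsistarZ dual) scalerDr. Qed.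
Lemma WxB x y : Wx (x - y) = Wx x - Wx y.
Proof.
have -> : x - y = x + (-1) *: y by rewrite scaleN1r.
by rewrite WxD WxZ rmorphN1 scaleN1r.
Qed.

Lemma Rlin_entry (G : 'rV[R]_NN -> 'M[C]_(p, p)) i j :
  (forall x y, G (x + y) = G x + G y) -> (forall r x, G (r *: x) = r%:C *: G x) ->
  Rlin (fun x => G x i j).
Proof. by move=> h1 h2; split => [x y|r x]; rewrite ?h1 ?h2 mxE. Qed.

Lemma Fx_cont : continuous Fx.
Proof.
apply: cont_sum => i; apply: cont_sum => j.
have [c1 c2] := Rlin_cont (Rlin_entry i j WxD WxZ).
by move=> x; exact: (continuousD (continuousM (c1 x) (c1 x)) (continuousM (c2 x) (c2 x))).
Qed.


Definition E00 : 'M[C]_q := delta_mx 0 0.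
Definition F1 := ipR (Psistar E00) (Psistar E00).
Definition cQ : R := 2 + F1 + \sum_(i < p) \sum_(j < p)
   (L1 (Psi (delta_mx i j)) + L1 (Psi ('i%C *: delta_mx i j))).
Definition boxM a b (c : R) (M : 'M[C]_(a, b)) :=
  forall i j, `|Re (M i j)| <= c /\ `|Im (M i j)| <= c.
Definition Aset := [set x : 'rV[R]_NN | boxM 1 (sigx x) /\ boxM cQ (Qx x) /\
  psd (sigx x) /\ \tr (sigx x) = 1 /\ psd (Qx x)].

Lemma AsetE x : Aset x = (boxM 1 (sigx x) /\ boxM cQ (Qx x) /\
  psd (sigx x) /\ \tr (sigx x) = 1 /\ psd (Qx x)).
Proof. by []. Qed.

Lemma sum2_entry a b (G : 'I_a -> 'I_b -> R) i j : (forall i j, 0 <= G i j) ->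
  G i j <= \sum_i \sum_j G i j.
Proof.
move=> h; rewrite (bigD1 i) //= (bigD1 j) //= -addrA lerDl.
by apply: addr_ge0; apply: sumr_ge0 => k _; [|apply: sumr_ge0 => l _].
Qed.

Lemma F1_ge0 : 0 <= F1. Proof. exact: ipR_ge0. Qed.
Lemma cQ_ge : 2 + F1 <= cQ.
Proof.
rewrite /cQ lerDl; apply: sumr_ge0 => i _; apply: sumr_ge0 => j _.
by rewrite addr_ge0 // L1_ge0.
Qed.

Lemma Rlin_sig i j : Rlin (fun x => sigx x i j).
Proof. by split => [x y|r x]; rewrite ?sigxD ?sigxZ mxE. Qed.
Lemma Rlin_Q i j : Rlin (fun x => Qx x i j).
Proof. by split => [x y|r x]; rewrite ?QxD ?QxZ mxE. Qed.
Lemma Rlin_formsig v : Rlin (fun x => form v (sigx x)).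
Proof. by split => [x y|r x]; rewrite ?sigxD ?sigxZ ?formDA ?formZA. Qed.
Lemma Rlin_formQ v : Rlin (fun x => form v (Qx x)).
Proof. by split => [x y|r x]; rewrite ?QxD ?QxZ ?formDA ?formZA. Qed.
Lemma Rlin_tr : Rlin (fun x => \tr (sigx x)).
Proof. by split => [x y|r x]; rewrite ?sigxD ?sigxZ ?mxtraceD ?mxtraceZ. Qed.

Lemma Aset_closed : closed Aset.
Proof.
apply: closedI.
  apply: (@closed_box _ _ ('I_q * 'I_q)%type (fun ij x => sigx x ij.1 ij.2)).
    by case=> i j; apply: Rlin_sig.
  by move=> x; split => [h [i j]|h i j]; [apply: h | apply: (h (i, j))].
apply: closedI.
  apply: (@closed_box _ _ ('I_p * 'I_p)%type (fun ij x => Qx x ij.1 ij.2)).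
    by case=> i j; apply: Rlin_Q.
  by move=> x; split => [h [i j]|h i j]; [apply: h | apply: (h (i, j))].
apply: closedI.
  have h := @closed_Cge0 NN 'cV[C]_q (fun v x => form v (sigx x)) Rlin_formsig.
  exact: h.
apply: closedI; last first.
  have h := @closed_Cge0 NN 'cV[C]_p (fun v x => form v (Qx x)) Rlin_formQ.
  exact: h.
have [c1 c2] := Rlin_cont Rlin_tr.
apply: (@closed_iff _ _ _ (bool * bool)%type
  (fun b x => (if b.2 then 1 else -1) * (if b.1 then Re (\tr (sigx x)) - 1 else Im (\tr (sigx x))))).
  case=> b1 b2 x /=.
  have hs : continuous (fun _ : 'rV[R]_NN => (if b2 then 1 else -1 : R)) by apply: cst_continuous.
  have hr : continuous (fun x0 => if b1 then Re (\tr (sigx x0)) - 1 else Im (\tr (sigx x0))).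
    case: b1 => // y; have hc : continuous (fun _ : 'rV[R]_NN => (-1 : R)) by apply: cst_continuous.
    exact: (continuousD (c1 y) (hc y)).
  exact: (continuousM (hs x) (hr x)).
move=> x; split.
  by move=> h [[] []] /=; rewrite h /= ?subrr ?mulr0.
move=> h; have := h (true, true); have := h (true, false); have := h (false, true);
  have := h (false, false); rewrite /= => h1 h2 h3 h4.
case E : (\tr (sigx x)) h1 h2 h3 h4 => [a b] /= h1 h2 h3 h4.
apply/eqP; rewrite eq_complex /=; apply/andP; split; apply/eqP; lra.
Qed.

Lemma Aset_compact : compact Aset.
Proof.
apply: (subclosed_compact Aset_closed
  (@rV_compact _ _ (fun _ : 'I_NN => `[- cQ, cQ]%classic) (fun _ => @segment_compact R (- cQ) cQ))).
move=> x [hs [hQ _]] k /=.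
have c1 : 1 <= cQ by have := cQ_ge; have := F1_ge0; lra.
have := @coord_bound R p q x cQ.
have h : forall k, `|x 0 k| <= cQ.
  apply: coord_bound => i j.
    by have [h1 h2] := hs i j; split; apply: le_trans c1.
  exact: hQ.
have -> : (ord0 : 'I_1) = 0 by apply/val_inj.
by move=> _; rewrite in_itv /= -ler_norml h.
Qed.

Lemma E00_vv : E00 = (delta_mx 0 0 : 'cV[C]_q) *m (delta_mx 0 0 : 'cV[C]_q)^t*.
Proof. by rewrite trmx_delta map_delta_mx mul_delta_mx. Qed.

Lemma E00_psd : psd E00.
Proof. rewrite E00_vv; exact: psd_vv. Qed.

Lemma E00_tr : \tr E00 = 1.
Proof. by rewrite E00_vv tr_vv ipR_delta mxE eqxx. Qed.

Lemma x1_in : Aset (coords E00 0).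
Proof.
rewrite AsetE sigx_coords Qx_coords; split.
  move=> i j; rewrite mxE; case: (_ && _) => /=; rewrite ?normr1 ?normr0 ?ler01 //.
split.
  by move=> i j; rewrite mxE /= normr0; have := cQ_ge; have := F1_ge0; lra.
split; first exact: E00_psd.
split; first exact: E00_tr.
by move=> v; rewrite mulmx0 mul0mx mxE.
Qed.

Lemma Fx1 : Fx (coords E00 0) = F1.
Proof. by rewrite /Fx /Wx sigx_coords Qx_coords addr0. Qed.


Lemma sq_bound (a M : R) : a ^+ 2 <= M -> `|a| <= 1 + M.
Proof.
move=> h; have M0 : 0 <= M by apply: le_trans h; apply: sqr_ge0.
case: (lerP `|a| 1) => ha; first lra.
have : `|a| <= `|a| ^+ 2 by rewrite expr2 ler_peMl // ltW.
rewrite real_normK ?num_real //; lra.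
Qed.

Lemma vv_bound (v : 'cV[C]_q) i j :
  `|Re ((v *m v^t*) i j)| <= ipR v v /\ `|Im ((v *m v^t*) i j)| <= ipR v v.
Proof.
rewrite vv_entry ReM ImM ReJ ImJ.
have ha := ipR_entry2 v i 0; have hb := ipR_entry2 v j 0.
move: ha hb; set a1 := Re (v i 0); set a2 := Im (v i 0); set b1 := Re (v j 0); set b2 := Im (v j 0).
move=> ha hb.
have s1 := sqr_ge0 (a1 - b1); have s2 := sqr_ge0 (a2 - b2).
have s3 := sqr_ge0 (a1 + b1); have s4 := sqr_ge0 (a2 + b2).
have s5 := sqr_ge0 (a1 - b2); have s6 := sqr_ge0 (a2 + b1).
have s7 := sqr_ge0 (a1 + b2); have s8 := sqr_ge0 (a2 - b1).
rewrite !expr2 in ha hb s1 s2 s3 s4 s5 s6 s7 s8.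
rewrite !ler_norml; split; (apply/andP; split); nra.
Qed.

Lemma sigxB x y : sigx (x - y) = sigx x - sigx y.
Proof.
have -> : x - y = x + (-1) *: y by rewrite scaleN1r.
by rewrite sigxD sigxZ rmorphN1 scaleN1r.
Qed.
Lemma QxB x y : Qx (x - y) = Qx x - Qx y.
Proof.
have -> : x - y = x + (-1) *: y by rewrite scaleN1r.
by rewrite QxD QxZ rmorphN1 scaleN1r.
Qed.

Lemma comb_bound (c t x y : R) : `|x| <= c -> `|y| <= c -> 0 <= t -> t <= 1 ->
  `|x + t * (y - x)| <= c.
Proof.
rewrite !ler_norml => /andP[x1 x2] /andP[y1 y2] t0 t1.
have u1 : 0 <= t * (c - y) by rewrite mulr_ge0 // subr_ge0.
have u2 : 0 <= t * (y + c) by rewrite mulr_ge0 // -lerBlDr sub0r.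
have u3 : 0 <= (1 - t) * (c - x) by rewrite mulr_ge0 // subr_ge0.
have u4 : 0 <= (1 - t) * (x + c) by rewrite mulr_ge0 ?subr_ge0 // -lerBlDr sub0r.
apply/andP; split; nra.
Qed.

Lemma box_comb a b (c t : R) (A B : 'M[C]_(a, b)) : boxM c A -> boxM c B -> 0 <= t -> t <= 1 ->
  boxM c (A + t%:C *: (B - A)).
Proof.
move=> hA hB t0 t1 i j; rewrite !mxE ReD ImD ReCM ImCM ReD ImD ReN ImN.
have [a1 a2] := hA i j; have [b1 b2] := hB i j.
by split; apply: comb_bound.
Qed.


Lemma psd_comb (t : R) (A B : 'M[C]_q) : psd A -> psd B -> 0 <= t -> t <= 1 ->
  psd (A + t%:C *: (B - A)).
Proof.
move=> hA hB t0 t1 v; rewrite -/(form v _) formDA formZA formDA formNA.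
have -> : form v A + t%:C * (form v B - form v A) = (1 - t)%:C * form v A + t%:C * form v B.
  by rewrite rmorphB rmorph1; ring.
by apply: addr_ge0; apply: mulr_ge0; rewrite ?lecR ?subr_ge0 //; [apply: hA | apply: hB].
Qed.

Lemma psd_combQ (t : R) (A B : 'M[C]_p) : psd A -> psd B -> 0 <= t -> t <= 1 ->
  psd (A + t%:C *: (B - A)).
Proof.
move=> hA hB t0 t1 v; rewrite -/(form v _) formDA formZA formDA formNA.
have -> : form v A + t%:C * (form v B - form v A) = (1 - t)%:C * form v A + t%:C * form v B.
  by rewrite rmorphB rmorph1; ring.
by apply: addr_ge0; apply: mulr_ge0; rewrite ?lecR ?subr_ge0 //; [apply: hA | apply: hB].
Qed.

Lemma Aset_convex x z t : Aset x -> Aset z -> 0 <= t -> t <= 1 -> Aset (x + t *: (z - x)).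
Proof.
move=> [b1 [b2 [s1 [tr1 q1]]]] [b1' [b2' [s1' [tr1' q1']]]] t0 t1.
rewrite AsetE sigxD sigxZ sigxB QxD QxZ QxB.
split; first exact: box_comb.
split; first exact: box_comb.
split; first exact: psd_comb.
split; last exact: psd_combQ.
by rewrite mxtraceD mxtraceZ linearB /= tr1 tr1' subrr mulr0 addr0.
Qed.

Section Min.
Variable x0 : 'rV[R]_NN.
Hypothesis x0A : Aset x0.
Hypothesis x0min : forall x, Aset x -> Fx x0 <= Fx x.

Local Notation S0 := (sigx x0).
Local Notation Q0 := (Qx x0).
Local Notation w0 := (Wx x0).
Local Notation F0 := (Fx x0).

Lemma FO_gen y e : 0 < e -> (forall t, 0 < t -> t <= e -> Aset (x0 + t *: y)) ->
  0 <= ipR w0 (Wx y).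
Proof.
move=> e0 hA; apply: (fo_real e0 (ipR_ge0 (Wx y))) => t t0 te.
have := x0min (hA t t0 te).
rewrite /Fx WxD WxZ; move: (Wx x0) (Wx y) => a b.
rewrite ipRDl !ipRDr !ipRZl !ipRZr [ipR b a]ipRC expr2; lra.
Qed.

Lemma VI z : Aset z -> 0 <= ipR w0 (Wx z - w0).
Proof.
move=> zA; rewrite -WxB; apply: (@FO_gen _ 1 ltr01) => t t0 t1.
by apply: Aset_convex => //; apply: ltW.
Qed.

Lemma F0_le : F0 <= F1.
Proof. by rewrite -Fx1; apply: x0min; apply: x1_in. Qed.

Lemma Q0E : Q0 = w0 - Psistar S0.
Proof. by rewrite /Wx addrC addKr. Qed.

Lemma Q0_bound i j : `|Re (Q0 i j)| <= cQ - 1 /\ `|Im (Q0 i j)| <= cQ - 1.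
Proof.
have [bS _] := x0A.
have hw := ipR_entry w0 i j.
have F0F1 := F0_le.
have hs := @sum2_entry p p (fun i j => L1 (Psi (delta_mx i j)) + L1 (Psi ('i%C *: delta_mx i j))) i j.
have hs' : L1 (Psi (delta_mx i j)) + L1 (Psi ('i%C *: delta_mx i j)) <=
   \sum_(i < p) \sum_(j < p) (L1 (Psi (delta_mx i j)) + L1 (Psi ('i%C *: delta_mx i j))).
  by apply: hs => k l; rewrite addr_ge0 // L1_ge0.
have l1 := L1_ge0 (Psi (delta_mx i j)); have l2 := L1_ge0 (Psi ('i%C *: delta_mx i j)).
have e1 : Re (Psistar S0 i j) = ipR S0 (Psi (delta_mx i j)).
  by rewrite -ipR_delta ipRC (dual_ip dual).
have e2 : Im (Psistar S0 i j) = ipR S0 (Psi ('i%C *: delta_mx i j)).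
  by rewrite -ipR_idelta ipRC (dual_ip dual).
have k1 := ipR_L1 (Psi (delta_mx i j)) bS.
have k2 := ipR_L1 (Psi ('i%C *: delta_mx i j)) bS.
have [hw1 hw2] := hw; rewrite -/(Fx x0) in hw1 hw2.
have r1 := sq_bound (le_trans hw1 F0F1); have r2 := sq_bound (le_trans hw2 F0F1).
have E : forall (A B : 'M[C]_p), (A - B) i j = A i j - B i j by move=> A B; rewrite !mxE.
rewrite Q0E E; move: (Wx x0 i j) r1 r2 => z r1 r2.
rewrite ReD ImD ReN ImN e1 e2.
rewrite /cQ; split.
  apply: le_trans (ler_normB _ _) _; lra.
apply: le_trans (ler_normB _ _) _; lra.
Qed.

Lemma FO1 v : 0 <= Re (form v w0).
Proof.
pose V := v *m v^t*.
have LV := L1_ge0 V.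
have [bS [bQ [pS [tS pQ]]]] := x0A.
have e0 : 0 < (1 + L1 V)^-1 by rewrite invr_gt0; lra.
have := @FO_gen (coords 0 V) ((1 + L1 V)^-1) e0.
rewrite /Wx sigx_coords Qx_coords (Psistar0 dual) add0r form_ip ipRC; apply.
move=> t t0 te.
have tL : t * L1 V <= 1.
  have : t * (1 + L1 V) <= 1 by rewrite -ler_pdivlMr ?mul1r //; lra.
  have := mulr_ge0 (ltW t0) LV; lra.
rewrite AsetE sigxD sigxZ QxD QxZ sigx_coords Qx_coords scaler0 addr0.
split; first exact: bS.
split; last first.
  split; first exact: pS.
  split; first exact: tS.
  apply: psdD; first exact: pQ.
  by apply: psdZ; [apply: ltW | apply: psd_vv].
move=> i j.
have E : forall (A B : 'M[C]_p) (c : C), (A + c *: B) i j = A i j + c * B i j by move=> *; rewrite !mxE.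
rewrite E ReD ImD ReCM ImCM.
have [q1 q2] := Q0_bound i j; have [v1 v2] := L1_entry V i j.
have w1 : t * `|Re (V i j)| <= 1 by apply: le_trans tL; rewrite ler_wpM2l // ltW.
have w2 : t * `|Im (V i j)| <= 1 by apply: le_trans tL; rewrite ler_wpM2l // ltW.
split; apply: le_trans (ler_normD _ _) _; rewrite normrM gtr0_norm //; lra.
Qed.

Lemma FO2 : ipR w0 Q0 <= 0.
Proof.
have [bS [bQ [pS [tS pQ]]]] := x0A.
have zA : Aset (coords S0 0).
  rewrite AsetE sigx_coords Qx_coords; split; first exact: bS.
  split.
    move=> i j; rewrite mxE /= normr0; have := cQ_ge; have := F1_ge0; split; lra.
  split; first exact: pS. split; first exact: tS.
  by move=> v; rewrite mulmx0 mul0mx mxE.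
have := VI zA; rewrite /Wx sigx_coords Qx_coords addr0 opprD addrA subrr add0r ipRNr; lra.
Qed.

Lemma FO3 v : F0 * ipR v v <= Re (form v (Psi w0)).
Proof.
have [bS [bQ [pS [tS pQ]]]] := x0A.
have nv0 := ipR_ge0 v.
case: (eqVneq (ipR v v) 0) => [e|ne].
  have v0 := ipR_eq0 e.
  by rewrite v0 ipR0l mulr0 /form mulmx0 mxE.
have nvp : 0 < ipR v v by rewrite lt_def ne.
pose nv := ipR v v.
pose V := v *m v^t*.
pose s1 := (nv^-1)%:C *: V.
have zA : Aset (coords s1 Q0).
  rewrite AsetE sigx_coords Qx_coords.
  split.
    move=> i j; have [h1 h2] := vv_bound v i j.
    have E : forall (M : 'M[C]_q) c, (c *: M) i j = c * M i j by move=> *; rewrite mxE.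
    have ip : 0 <= nv^-1 by rewrite invr_ge0 ltW.
    rewrite /s1 E ReCM ImCM !normrM (ger0_norm ip).
    by split; rewrite ler_pdivrMl // mulr1.
  split; first exact: bQ.
  split; first by apply: psdZ; [rewrite invr_ge0 ltW | apply: psd_vv].
  split; last exact: pQ.
  by rewrite /s1 mxtraceZ tr_vv -rmorphM mulVf ?gt_eqF.
have h := VI zA.
have Wz : Wx (coords s1 Q0) = Psistar s1 + Q0 by rewrite /Wx sigx_coords Qx_coords.
have f2 := FO2.
have e : ipR (Wx x0) (Psistar s1) = nv^-1 * Re (form v (Psi (Wx x0))).
  by rewrite ipRC (dual_ip dual) /s1 ipRZl -form_ip.
rewrite Wz -/(Fx x0) /Fx in h *.
move: (Wx x0) h f2 e => w h f2 e.
rewrite ipRBr ipRDr e in h.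
have h3 : ipR w w <= nv^-1 * Re (form v (Psi w)) by lra.
have h4 : nv * ipR w w <= nv * (nv^-1 * Re (form v (Psi w))) by rewrite ler_wpM2l // ltW.
rewrite mulrA mulfV ?gt_eqF // mul1r in h4.
rewrite mulrC; exact: h4.
Qed.

Lemma P1_of_pos : 0 < F0 -> semi_positive Psi.
Proof.
move=> F0p.
have fo1 := FO1; have fo3 := FO3.
pose h := (2^-1 : R)%:C *: (w0 + w0^t*).
have hh : h^t* = h by rewrite /h tcZ conjRc tcD trmxCK addrC.
have hf : forall v, Re (form v h) = Re (form v w0).
  by move=> v; rewrite /h formZA formDA formJ ReCM ReD ReJ; lra.
have Ph : Psi h = (2^-1 : R)%:C *: (Psi w0 + (Psi w0)^t*) by rewrite /h linearZ linearD /= HP.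
have hPf : forall v, Re (form v (Psi h)) = Re (form v (Psi w0)).
  by move=> v; rewrite Ph formZA formDA formJ ReCM ReD ReJ; lra.
pose B := Psi 1%:M.
pose k := 1 + ipR B B.
have k0 : 0 < k by have := ipR_ge0 B; rewrite /k; lra.
pose d := F0 / k.
have d0 : 0 < d by rewrite divr_gt0.
have dk : d * k = F0 by rewrite /d mulfVK ?gt_eqF.
have pos : forall (a : nat) (v : 'cV[C]_a), v != 0 -> 0 < ipR v v.
  move=> a v nz; rewrite lt_def ipR_ge0 andbT; apply/negP => /eqP e; move: nz.
  by rewrite (ipR_eq0 e) eqxx.
have hB : forall v, - (k / 2) * ipR v v <= Re (form v B).
  move=> v; case: (eqVneq v 0) => [->|nz].
    by rewrite ipR0l mulr0 /form mulmx0 mxE.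
  have nvp := pos _ v nz.
  have il : 0 < (ipR v v)^-1 by rewrite invr_gt0.
  have := @ipR_AMGM R q q (ipR v v)^-1 (v *m v^t*) B il.
  rewrite ipR_vv invrK -form_ip.
  have e2 : (ipR v v)^-1 * (ipR v v)^+2 = ipR v v by rewrite expr2 mulKf // gt_eqF.
  rewrite e2 => hh2.
  have := ler_norm (- Re (form v B)); rewrite normrN.
  rewrite /k; lra.
pose r0 := h + d%:C *: 1%:M.
have r0h : r0^t* = r0 by rewrite /r0 tcD hh tcZ conjRc (@tc1 R p).
have r0f : forall v, d * ipR v v <= Re (form v r0).
  by move=> v; rewrite /r0 formDA formZA form_one ReD ReCM Rec hf; have := fo1 v; lra.
have Pr0 : Psi r0 = Psi h + d%:C *: B by rewrite /r0 /B linearD /= [Psi (_ *: 1%:M)]linearZ.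
have Pr0h : (Psi r0)^t* = Psi r0 by rewrite -HP r0h.
have Pr0f : forall v, (F0 / 2) * ipR v v <= Re (form v (Psi r0)).
  move=> v; rewrite Pr0 formDA formZA ReD ReCM hPf.
  have m1 : d * (- (k / 2) * ipR v v) <= d * Re (form v B) by rewrite ler_wpM2l // ?ltW // hB.
  have m2 : d * (- (k / 2) * ipR v v) = - (F0 / 2) * ipR v v by rewrite -dk; ring.
  have := fo3 v; have := ipR_ge0 v; rewrite m2 in m1; lra.
have r0psd : psd r0.
  apply: psd_of_Re => // v; apply: le_trans (r0f v); exact: mulr_ge0 (ltW d0) (ipR_ge0 v).
have r0u : r0 \in unitmx.
  by apply: unit_of_pos => v nz; apply: lt_le_trans (r0f v); rewrite mulr_gt0 // pos.
have F2 : 0 < F0 / 2 by rewrite divr_gt0.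
have Pr0psd : psd (Psi r0).
  apply: psd_of_Re => // v; apply: le_trans (Pr0f v); exact: mulr_ge0 (ltW F2) (ipR_ge0 v).
have Pr0u : Psi r0 \in unitmx.
  by apply: unit_of_pos => v nz; apply: lt_le_trans (Pr0f v); rewrite mulr_gt0 // pos.
pose tau := Re (\tr r0).
have trI : Im (\tr r0) = 0.
  by rewrite tr_form Im_sum big1 // => i _; apply: herm_form_real.
have trE : \tr r0 = tau%:C by apply: C_real_eq.
have tau0 : 0 < tau.
  rewrite /tau tr_form Re_sum (bigD1 0) //=.
  have a : 0 < Re (form (delta_mx 0 0) r0).
    apply: lt_le_trans (r0f _); rewrite mulr_gt0 // ipR_delta mxE eqxx /=; exact: ltr01.
  have b : 0 <= \sum_(i < p | i != 0) Re (form (delta_mx i 0) r0).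
    apply: sumr_ge0 => i _; apply: le_trans (r0f _); exact: mulr_ge0 (ltW d0) (ipR_ge0 _).
  lra.
have tauC : (tau^-1)%:C \is a GRing.unit.
  by rewrite unitfE fmorph_eq0 invr_eq0 gt_eqF.
exists ((tau^-1)%:C *: r0); split.
  split; last by rewrite unitmxZ.
  split; first by apply: psdZ => //; rewrite invr_ge0 ltW.
  by rewrite mxtraceZ trE -rmorphM mulVf ?gt_eqF.
rewrite linearZ /=; split; last by rewrite unitmxZ.
split; first by apply: psdZ => //; rewrite invr_ge0 ltW.
by rewrite mxtraceZ TP trE -rmorphM mulVf ?gt_eqF.
Qed.

End Min.

Lemma exists_alt : semi_positive Psi \/ semi_nonnegative (fun Y => - Psistar Y).
Proof.
have ne : Aset !=set0 by exists (coords E00 0); exact: x1_in.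
have [x0 x0A x0min] := compact_EVT_min ne Aset_compact (continuous_subspaceT Fx_cont).
have x0A' : Aset x0 by rewrite inE in x0A.
have x0min' : forall x, Aset x -> Fx x0 <= Fx x by move=> x hx; apply: x0min; rewrite inE.
have := ipR_ge0 (Wx x0); rewrite le_eqVlt => /orP[/eqP F0z|F0p].
  right; exists (sigx x0).
  have [bS [bQ [pS [tS pQ]]]] := x0A'.
  have w0z : Wx x0 = 0 by apply: ipR_eq0; rewrite -F0z.
  split; first by split.
  have -> : - Psistar (sigx x0) = Qx x0.
    by move: w0z; rewrite /Wx => /eqP; rewrite addrC addr_eq0 => /eqP ->.
  exact: pQ.
left; exact: (P1_of_pos x0A' x0min' F0p).
Qed.

End P8.

Local Close Scope classical_set_scope.

Theorem theorem5 (R : realType) (n m : nat)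
    (Psi : {linear 'M[R[i]]_n.+1 -> 'M[R[i]]_m.+1})
    (Psistar : 'M[R[i]]_m.+1 -> 'M[R[i]]_n.+1) :
  hermitian_preserving Psi -> trace_preserving Psi ->
  is_dual_map Psi Psistar ->
  let P1 := semi_positive Psi in
  let P2 := semi_nonnegative (fun Y => - Psistar Y) in
  (P1 \/ P2) /\ ~ (P1 /\ P2).
Proof.
move=> HP TP dual P1 P2; split.
  exact: (exists_alt HP TP dual).
exact: (exclusive dual).
Qed.
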